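(* (Equivalence of CPL natural deduction and sequent calculus.) Fix a set $W$ of worlds with a converse well-founded accessibility relation $\prec$. For every context $\Gamma$, proposition $A$ and world $w$: $\Gamma \vdash_{\mathbf{CPL}} A[w]$ if and only if $\Gamma \Rightarrow A[w]$.
   Context: Fix a set $W$ of worlds and a binary accessibility relation $\prec$ on $W$ that is converse well-founded: there is no infinite chain $w_0 \prec w_1 \prec \cdots$. Propositions: $A,B,C ::= Q \mid \bot \mid A \supset B \mid \Diamond A \mid \Box A$, $Q$ atomic. A context $\Gamma$ is a finite collection of judgments $A[w]$ ($w \in W$). Both judgments below are defined one world at a time (provability at $w$ after provability at all worlds reachable from $w$ by one or more $\prec$-steps; well-defined by converse well-foundedness), each as the least relation closed under its rules; premises may be meta-level universal quantifications and implications. Natural deduction $\Gamma \vdash_{\mathbf{CPL}} A[w]$: (hyp) $\Gamma, A[w] \vdash A[w]$. ($\bot E$) $\Gamma \vdash \bot[w]$ implies $\Gamma \vdash C[w]$. ($\supset I$) $\Gamma, A[w] \vdash B[w]$ implies $\Gamma \vdash A \supset B[w]$. ($\supset E$) $\Gamma \vdash A \supset B[w]$ and $\Gamma \vdash A[w]$ imply $\Gamma \vdash B[w]$. ($\Diamond I$) $w \prec w'$ and $\Gamma \vdash A[w']$ imply $\Gamma \vdash \Diamond A[w]$. ($\Box I$) if $\Gamma \vdash A[w']$ for all $w'$ with $w \prec w'$ then $\Gamma \vdash \Box A[w]$. ($\Diamond E$) if $\Gamma \vdash \Diamond A[w]$ and for all $w'$ with $w\prec w'$, $\Gamma \vdash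 A[w']$ implies $\Gamma \vdash C[w]$, then $\Gamma \vdash C[w]$. ($\Box E$) if $\Gamma \vdash \Box A[w]$ and ($\Gamma \vdash A[w']$ for all $w'$ with $w \prec w'$) implies $\Gamma \vdash C[w]$, then $\Gamma \vdash C[w]$. Sequent calculus $\Gamma \Rightarrow A[w]$: (init) $\Gamma, Q[w] \Rightarrow Q[w]$ for $Q$ atomic. ($\bot L$) $\bot[w]\in\Gamma$ implies $\Gamma \Rightarrow C[w]$. ($\supset R$) $\Gamma, A[w] \Rightarrow B[w]$ implies $\Gamma \Rightarrow A \supset B[w]$. ($\supset L$) $A\supset B[w] \in \Gamma$, $\Gamma \Rightarrow A[w]$ and $\Gamma, B[w] \Rightarrow C[w]$ imply $\Gamma \Rightarrow C[w]$. ($\Diamond R$) $w\prec w'$ and $\Gamma \Rightarrow A[w']$ imply $\Gamma \Rightarrow \Diamond A[w]$. ($\Box R$) if $\Gamma \Rightarrow A[w']$ for all $w'$ with $w \prec w'$ then $\Gamma \Rightarrow \Box A[w]$. ($\Diamond L$) if $\Diamond A[w]\in\Gamma$ and for all $w'$ with $w \prec w'$, $\Gamma \Rightarrow A[w']$ implies $\Gamma \Rightarrow C[w]$, then $\Gamma \Rightarrow C[w]$. ($\Box L$) if $\Box A[w]\in\Gamma$ and ($\Gamma \Rightarrow A[w']$ for all $w'$ with $w\prec w'$) implies $\Gamma \Rightarrow C[w]$, then $\Gamma \Rightarrow C[w]$. *)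

(* Defs.v *)
From Stdlib Require Import List.
Import ListNotations.
Set Implicit Arguments.

Inductive prop (Atom : Type) : Type :=
| Atm : Atom -> prop Atom
| Bot : prop Atom
| Imp : prop Atom -> prop Atom -> prop Atom
| Dia : prop Atom -> prop Atom
| Box : prop Atom -> prop Atom.
Arguments Bot {Atom}.

Definition ctx (Atom W : Type) : Type := list (prop Atom * W).

Section Calculi.
Variables (Atom W : Type) (R : W -> W -> Prop).

Definition Rc (y x : W) : Prop := R x y.

(* Natural deduction at a fixed world w, given the (already defined)
   provability H w' at the worlds w' with w ≺ w'. Least relation. *)
Inductive nd_step (w : W) (H : W -> ctx Atom W -> prop Atom -> Prop)
  : ctx Atom W -> prop Atom -> Prop :=
| nd_hyp G A : In (A, w) G -> nd_step w H G A
| nd_botE G C : nd_step w H G Bot -> nd_step w H G C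
| nd_impI G A B : nd_step w H ((A, w) :: G) B -> nd_step w H G (Imp A B)
| nd_impE G A B : nd_step w H G (Imp A B) -> nd_step w H G A -> nd_step w H G B
| nd_diaI G A w' : R w w' -> H w' G A -> nd_step w H G (Dia A)
| nd_boxI G A : (forall w', R w w' -> H w' G A) -> nd_step w H G (Box A)
| nd_diaE G A C : nd_step w H G (Dia A) ->
    (forall w', R w w' -> H w' G A -> nd_step w H G C) -> nd_step w H G C
| nd_boxE G A C : nd_step w H G (Box A) ->
    ((forall w', R w w' -> H w' G A) -> nd_step w H G C) -> nd_step w H G C.

Inductive sq_step (w : W) (H : W -> ctx Atom W -> prop Atom -> Prop)
  : ctx Atom W -> prop Atom -> Prop :=
| sq_init G q : In (Atm q, w) G -> sq_step w H G (Atm q)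
| sq_botL G C : In (Bot, w) G -> sq_step w H G C
| sq_impR G A B : sq_step w H ((A, w) :: G) B -> sq_step w H G (Imp A B)
| sq_impL G A B C : In (Imp A B, w) G -> sq_step w H G A ->
    sq_step w H ((B, w) :: G) C -> sq_step w H G C
| sq_diaR G A w' : R w w' -> H w' G A -> sq_step w H G (Dia A)
| sq_boxR G A : (forall w', R w w' -> H w' G A) -> sq_step w H G (Box A)
| sq_diaL G A C : In (Dia A, w) G ->
    (forall w', R w w' -> H w' G A -> sq_step w H G C) -> sq_step w H G C
| sq_boxL G A C : In (Box A, w) G ->
    ((forall w', R w w' -> H w' G A) -> sq_step w H G C) -> sq_step w H G C.

(* World-by-world definition, by recursion on accessibility for the converse
   relation (i.e. provability at w defined after all worlds above w). *)
Fixpoint nd_acc (w : W) (a : Acc Rc w) {struct a} : ctx Atom W -> prop Atom -> Prop :=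
  match a with
  | Acc_intro _ f =>
      nd_step w (fun w' G A => exists h : R w w', nd_acc (f w' h) G A)
  end.

Fixpoint sq_acc (w : W) (a : Acc Rc w) {struct a} : ctx Atom W -> prop Atom -> Prop :=
  match a with
  | Acc_intro _ f =>
      sq_step w (fun w' G A => exists h : R w w', sq_acc (f w' h) G A)
  end.

Definition ND (G : ctx Atom W) (A : prop Atom) (w : W) : Prop :=
  exists a : Acc Rc w, nd_acc a G A.

Definition SEQ (G : ctx Atom W) (A : prop Atom) (w : W) : Prop :=
  exists a : Acc Rc w, sq_acc a G A.

Definition conv_wf : Prop :=
  ~ exists f : nat -> W, forall n, R (f n) (f (S n)).

End Calculi.

(* Main.v *)
Require Import Defs.
From Stdlib Require Import List Relations.
Import ListNotations.

Definition agree {Atom W : Type} (w : W) (G G' : ctx Atom W) : Prop :=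
  forall X u, u <> w -> (In (X, u) G <-> In (X, u) G').

Definition Hinv {Atom W : Type} (R : W -> W -> Prop) (w : W)
  (H : W -> ctx Atom W -> prop Atom -> Prop) : Prop :=
  forall w' G G' B, R w w' -> agree w G G' -> H w' G B -> H w' G' B.

Lemma agree_sym {Atom W : Type} (w : W) (G G' : ctx Atom W) :
  agree w G G' -> agree w G' G.
Proof. intros Ha X u Hu. symmetry. apply Ha; auto. Qed.

Lemma agree_cons {Atom W : Type} (w : W) (G : ctx Atom W) A :
  agree w G ((A, w) :: G).
Proof.
  intros X u Hu; split; intro Hi; [right; auto|].
  destruct Hi as [E|Hi]; [inversion E; congruence|auto].
Qed.

Lemma agree_cons2 {Atom W : Type} (w : W) (G G' : ctx Atom W) A :
  agree w G G' -> agree w ((A, w) :: G) ((A, w) :: G').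
Proof.
  intros Ha X u Hu; split; intros [E|Hi].
  - left; auto.
  - right; apply (Ha X u Hu); auto.
  - left; auto.
  - right; apply (Ha X u Hu); auto.
Qed.

Lemma incl_cons2 {T : Type} (a : T) (G G' : list T) :
  incl G G' -> incl (a :: G) (a :: G').
Proof. intros Hi x [E|Hx]; [left; auto|right; auto]. Qed.

Lemma sq_weak {Atom W : Type} (R : W -> W -> Prop) w H (Hi : Hinv R w H)
  (G : ctx Atom W) C :
  sq_step R w H G C -> forall G', incl G G' -> agree w G G' -> sq_step R w H G' C.
Proof.
  induction 1; intros G' Hin Ha.
  - apply sq_init; auto.
  - apply sq_botL; auto.
  - apply sq_impR; apply IHsq_step; [apply incl_cons2; auto|apply agree_cons2; auto].
  - apply sq_impL with A B; auto.
    apply IHsq_step2; [apply incl_cons2; auto|apply agree_cons2; auto].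
  - apply sq_diaR with w'; auto. apply (Hi w' G G'); auto.
  - apply sq_boxR; intros w' r. apply (Hi w' G G'); auto.
  - apply sq_diaL with A; auto. intros w' r h.
    apply H2 with w'; auto. apply (Hi w' G' G); auto. apply agree_sym; auto.
  - apply sq_boxL with A; auto. intros h.
    apply H2; auto. intros w' r. apply (Hi w' G' G); auto. apply agree_sym; auto.
Qed.

Lemma sq_id {Atom W : Type} (R : W -> W -> Prop) w H (A : prop Atom) :
  forall (G : ctx Atom W), In (A, w) G -> sq_step R w H G A.
Proof.
  induction A; intros G Hin.
  - apply sq_init; auto.
  - apply sq_botL; auto.
  - apply sq_impR. apply sq_impL with A1 A2.
    + right; auto.
    + apply IHA1; left; auto.
    + apply IHA2; left; auto.
  - apply sq_diaL with A; auto. intros w' r h. apply sq_diaR with w'; auto.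
  - apply sq_boxL with A; auto. intros h. apply sq_boxR; auto.
Qed.

Definition equivc {T : Type} (G G' : list T) := incl G G' /\ incl G' G.

Lemma equiv_agree {Atom W : Type} (w : W) (G2 G : ctx Atom W) A :
  equivc G2 ((A, w) :: G) -> agree w G2 G.
Proof.
  intros [H1 H2] X u Hu; split; intro Hi.
  - destruct (H1 _ Hi) as [E|E]; [inversion E; congruence|auto].
  - apply H2; right; auto.
Qed.

Lemma elimE {Atom W : Type} (R : W -> W -> Prop) w H (Hi : Hinv R w H)
  (A : prop Atom) (Data : ctx Atom W -> Prop)
  (Dst : forall G G', incl G G' -> agree w G G' -> Data G -> Data G')
  (nAt : forall q, A <> Atm q) (nBot : A <> Bot)
  (PImp : forall G X Y C, A = Imp X Y -> Data G -> sq_step R w H G X ->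
      sq_step R w H ((Y, w) :: G) C -> sq_step R w H G C)
  (PDia : forall G X C, A = Dia X -> Data G ->
      (forall w', R w w' -> H w' G X -> sq_step R w H G C) -> sq_step R w H G C)
  (PBox : forall G X C, A = Box X -> Data G ->
      ((forall w', R w w' -> H w' G X) -> sq_step R w H G C) -> sq_step R w H G C) :
  forall G2 C, sq_step R w H G2 C -> forall G, equivc G2 ((A, w) :: G) -> Data G ->
    sq_step R w H G C.
Proof.
  induction 1; intros G0 He Hd; pose proof (equiv_agree _ _ _ _ He) as Ha;
    destruct He as [I1 I2].
  - destruct (I1 _ H0) as [E|E]; [inversion E; exfalso; eapply nAt; eauto|].
    apply sq_init; auto.
  - destruct (I1 _ H0) as [E|E]; [inversion E; congruence|].
    apply sq_botL; auto.
  - apply sq_impR. apply IHsq_step.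
    + split; intros x Hx.
      * destruct Hx as [<-|Hx]; [right; left; auto|].
        destruct (I1 _ Hx) as [<-|Hx']; [left; auto|right; right; auto].
      * destruct Hx as [<-|[<-|Hx]]; [right; apply I2; left; auto|left; auto|].
        right; apply I2; right; auto.
    + apply Dst with G0; auto. intros x Hx; right; auto. apply agree_cons.
  - assert (D1 : sq_step R w H G0 A0) by (apply IHsq_step1; auto; split; auto).
    assert (D2 : sq_step R w H ((B, w) :: G0) C).
    { apply IHsq_step2.
      + split; intros x Hx.
        * destruct Hx as [<-|Hx]; [right; left; auto|].
          destruct (I1 _ Hx) as [<-|Hx']; [left; auto|right; right; auto].
        * destruct Hx as [<-|[<-|Hx]]; [right; apply I2; left; auto|left; auto|].
          right; apply I2; right; auto.
      + apply Dst with G0; auto. intros x Hx; right; auto. apply agree_cons. }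
    destruct (I1 _ H0) as [E|E].
    + inversion E; subst. eapply PImp; eauto.
    + apply sq_impL with A0 B; auto.
  - apply sq_diaR with w'; auto. apply (Hi w' G G0); auto.
  - apply sq_boxR; intros w' r. apply (Hi w' G G0); auto.
  - assert (K : forall w', R w w' -> H w' G0 A0 -> sq_step R w H G0 C).
    { intros w' r h. apply H2 with w'; auto.
      apply (Hi w' G0 G); auto. apply agree_sym; auto. split; auto. }
    destruct (I1 _ H0) as [E|E].
    + inversion E; subst. eapply PDia; eauto.
    + apply sq_diaL with A0; auto.
  - assert (K : (forall w', R w w' -> H w' G0 A0) -> sq_step R w H G0 C).
    { intros h. apply H2; auto. intros w' r.
      apply (Hi w' G0 G); auto. apply agree_sym; auto. split; auto. }
    destruct (I1 _ H0) as [E|E].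
    + inversion E; subst. eapply PBox; eauto.
    + apply sq_boxL with A0; auto.
Qed.

Definition cutP {Atom W : Type} (R : W -> W -> Prop) w H (A : prop Atom) : Prop :=
  forall (G : ctx Atom W) C, sq_step R w H G A -> sq_step R w H ((A, w) :: G) C ->
    sq_step R w H G C.

Lemma equiv_refl {T : Type} (G : list T) : equivc G G.
Proof. split; intros x Hx; auto. Qed.

Lemma cut_step {Atom W : Type} (R : W -> W -> Prop) w H (Hi : Hinv R w H)
  (A : prop Atom) :
  (forall A1 A2, A = Imp A1 A2 -> cutP R w H A1 /\ cutP R w H A2) -> cutP R w H A.
Proof.
  intros IHA G C D. revert C IHA. induction D; intros C0 IHA E.
  - apply (sq_weak R w H Hi _ _ E); [intros x [<-|Hx]; auto|].
    apply agree_sym, agree_cons.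
  - apply sq_botL; auto.
  - destruct (IHA A B eq_refl) as [CA CB].
    apply (elimE R w H Hi (Imp A B) (fun G => sq_step R w H ((A, w) :: G) B))
      with (G2 := (Imp A B, w) :: G); auto using equiv_refl.
    all: try (intros; congruence).
    + intros G1 G2 Hin Ha D'. apply (sq_weak R w H Hi _ _ D').
      apply incl_cons2; auto. apply agree_cons2; auto.
    + intros G1 X Y C1 Eq D1 DX DY. inversion Eq; subst.
      apply (CB G1 C1); [apply (CA G1 Y)|]; auto.
  - apply sq_impL with A B; auto. apply IHD2; auto.
    apply (sq_weak R w H Hi _ _ E).
    + intros x [<-|Hx]; [left; auto|right; right; auto].
    + intros X u Hu; split; intro Hx.
      * destruct Hx as [<-|Hx]; [left; auto|right; right; auto].
      * destruct Hx as [<-|[E'|Hx]]; [left; auto| inversion E'; congruence|right; auto].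
  - apply (elimE R w H Hi (Dia A) (fun G => H w' G A))
      with (G2 := (Dia A, w) :: G); auto using equiv_refl.
    all: try (intros; congruence).
    + intros G1 G2 Hin Ha D'. apply (Hi w' G1 G2); auto.
    + intros G1 X C1 Eq D1 K. inversion Eq; subst. apply K with w'; auto.
  - apply (elimE R w H Hi (Box A) (fun G => forall w', R w w' -> H w' G A))
      with (G2 := (Box A, w) :: G); auto using equiv_refl.
    all: try (intros; congruence).
    + intros G1 G2 Hin Ha D' w' r. apply (Hi w' G1 G2); auto.
    + intros G1 X C1 Eq D1 K. inversion Eq; subst. apply K; auto.
  - apply sq_diaL with A; auto. intros w' r h. apply H2 with w'; auto.
  - apply sq_boxL with A; auto.
Qed.

Lemma cut {Atom W : Type} (R : W -> W -> Prop) w H (Hi : Hinv R w H)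
  (A : prop Atom) : cutP R w H A.
Proof.
  induction A; apply cut_step; auto; intros B1 B2 E; inversion E; subst; auto.
Qed.

Lemma nd_sq {Atom W : Type} (R : W -> W -> Prop) w H (Hi : Hinv R w H)
  (G : ctx Atom W) A : nd_step R w H G A -> sq_step R w H G A.
Proof.
  induction 1.
  - apply sq_id; auto.
  - apply (cut R w H Hi Bot); auto. apply sq_botL; left; auto.
  - apply sq_impR; auto.
  - apply (cut R w H Hi (Imp A B)); auto.
    apply sq_impL with A B; [left; auto| |].
    + apply (sq_weak R w H Hi _ _ IHnd_step2); [intros x Hx; right; auto|apply agree_cons].
    + apply sq_id; left; auto.
  - apply sq_diaR with w'; auto.
  - apply sq_boxR; auto.
  - apply (cut R w H Hi (Dia A)); auto.
    apply sq_diaL with A; [left; auto|]. intros w' r h.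
    apply (sq_weak R w H Hi G); [|intros x Hx; right; auto|apply agree_cons].
    apply H2 with w'; auto. apply (Hi w' ((Dia A, w) :: G) G); auto.
    apply agree_sym, agree_cons.
  - apply (cut R w H Hi (Box A)); auto.
    apply sq_boxL with A; [left; auto|]. intros h.
    apply (sq_weak R w H Hi G); [|intros x Hx; right; auto|apply agree_cons].
    apply H2; auto. intros w' r. apply (Hi w' ((Box A, w) :: G) G); auto.
    apply agree_sym, agree_cons.
Qed.

Lemma sq_nd {Atom W : Type} (R : W -> W -> Prop) w H
  (G : ctx Atom W) A : sq_step R w H G A -> nd_step R w H G A.
Proof.
  induction 1.
  - apply nd_hyp; auto.
  - apply nd_botE, nd_hyp; auto.
  - apply nd_impI; auto.
  - apply nd_impE with B; [apply nd_impI; auto|].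
    apply nd_impE with A; auto. apply nd_hyp; auto.
  - apply nd_diaI with w'; auto.
  - apply nd_boxI; auto.
  - apply nd_diaE with A; [apply nd_hyp; auto|]. auto.
  - apply nd_boxE with A; [apply nd_hyp; auto|]. auto.
Qed.

Lemma nd_mono {Atom W : Type} (R : W -> W -> Prop) w H1 H2
  (Heq : forall w' (G : ctx Atom W) A, H1 w' G A <-> H2 w' G A)
  G A : nd_step R w H1 G A -> nd_step R w H2 G A.
Proof.
  induction 1.
  - apply nd_hyp; auto.
  - apply nd_botE; auto.
  - apply nd_impI; auto.
  - apply nd_impE with A; auto.
  - apply nd_diaI with w'; auto. apply Heq; auto.
  - apply nd_boxI; intros; apply Heq; auto.
  - apply nd_diaE with A; auto. intros w' r h. apply H3 with w'; auto. apply Heq; auto.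
  - apply nd_boxE with A; auto. intros h. apply H3. intros w' r; apply Heq; auto.
Qed.

Lemma no_cycle {W : Type} (R : W -> W -> Prop) :
  forall x, Acc (Rc R) x -> forall y, R x y -> clos_refl_trans W R y x -> False.
Proof.
  intros x Hacc; induction Hacc as [x _ IH]; intros y Rxy Hrt.
  apply clos_rt_rt1n in Hrt. inversion Hrt; subst.
  - apply (IH x Rxy x Rxy). apply rt_refl.
  - apply (IH y Rxy y0 H). apply clos_rt1n_rt in H0.
    apply rt_trans with x; auto. apply rt_step; auto.
Qed.

Definition eqc {Atom W : Type} (R : W -> W -> Prop) (v : W) (G G' : ctx Atom W) :=
  forall X u, clos_refl_trans W R v u -> (In (X, u) G <-> In (X, u) G').

Lemma eqc_sym {Atom W : Type} R v (G G' : ctx Atom W) : eqc R v G G' -> eqc R v G' G.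
Proof. intros He X u r; symmetry; apply He; auto. Qed.

Lemma sq_acc_eqc {Atom W : Type} (R : W -> W -> Prop) :
  forall v, Acc (Rc R) v -> forall (a : Acc (Rc R) v) (G G' : ctx Atom W) B,
    eqc R v G G' -> sq_acc a G B -> sq_acc a G' B.
Proof.
  intros v Hacc; induction Hacc as [v _ IH]; intros [f] G G' B He D; simpl in *.
  revert G' He; induction D; intros G' He.
  - apply sq_init; apply He; auto; apply rt_refl.
  - apply sq_botL; apply He; auto; apply rt_refl.
  - apply sq_impR; apply IHD. intros X u r; split; intros [E|Hx];
      [left|right; apply (He X u r)|left|right; apply (He X u r)]; auto.
  - apply sq_impL with A B; [apply He; auto; apply rt_refl|auto|].
    apply IHD2. intros X u r; split; intros [E|Hx];
      [left|right; apply (He X u r)|left|right; apply (He X u r)]; auto.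
  - destruct H0 as [h Hd]. apply sq_diaR with w'; auto. exists h.
    apply (IH w' h (f w' h) G G' A); auto.
    intros X u r. apply He. apply rt_trans with w'; auto. apply rt_step; auto.
  - apply sq_boxR; intros w' r. destruct (H w' r) as [h Hd]. exists h.
    apply (IH w' h (f w' h) G G' A); auto.
    intros X u r'. apply He. apply rt_trans with w'; auto. apply rt_step; auto.
  - apply sq_diaL with A; [apply He; auto; apply rt_refl|].
    intros w' r [h Hd]. apply (H1 w' r); [|exact He].
    exists h. apply (IH w' h (f w' h) G' G A); auto.
    intros X u r'. symmetry. apply He. apply rt_trans with w'; auto. apply rt_step; auto.
  - apply sq_boxL with A; [apply He; auto; apply rt_refl|].
    intros K. apply H1; [|exact He]. intros w' r. destruct (K w' r) as [h Hd]. exists h.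
    apply (IH w' h (f w' h) G' G A); auto.
    intros X u r'. symmetry. apply He. apply rt_trans with w'; auto. apply rt_step; auto.
Qed.

Lemma main_equiv {Atom W : Type} (R : W -> W -> Prop) :
  forall w, Acc (Rc R) w -> forall (a : Acc (Rc R) w) (G : ctx Atom W) A,
    nd_acc a G A <-> sq_acc a G A.
Proof.
  intros w Hacc; induction Hacc as [w _ IH]; intros [f] G A; simpl.
  assert (Heq : forall w' (G0 : ctx Atom W) A0,
    (exists h : R w w', nd_acc (f w' h) G0 A0) <-> (exists h : R w w', sq_acc (f w' h) G0 A0)).
  { intros w' G0 A0; split; intros [h D]; exists h; apply (IH w' h); auto. }
  assert (Hi : Hinv R w (fun w' (G0 : ctx Atom W) (A0 : prop Atom) => exists h : R w w', sq_acc (f w' h) G0 A0)).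
  { intros w' G1 G2 B r Ha [h D]. exists h.
    apply (sq_acc_eqc R w' (f w' h) (f w' h) G1 G2 B); auto.
    intros X u ru. apply Ha. intro E; subst.
    apply (no_cycle R w (Acc_intro w f) w' r ru). }
  split; intro D.
  - apply nd_sq; auto. eapply nd_mono; [|exact D]. exact Heq.
  - eapply nd_mono; [|apply sq_nd; exact D]. intros; symmetry; apply Heq.
Qed.

Theorem theorem3 (Atom W : Type) (R : W -> W -> Prop)
  (hwf : conv_wf R) (G : ctx Atom W) (A : prop Atom) (w : W) :
  ND R G A w <-> SEQ R G A w.
Proof.
  unfold ND, SEQ; split; intros [a D]; exists a.
  - apply (main_equiv R w a a); auto.
  - apply (main_equiv R w a a); auto.
Qed.
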